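(* Let $\pi=(\pi_n^{n+1}\colon(X_{n+1},f_{n+1})\to(X_n,f_n))_{n\ge1}$ be an inverse sequence of equivariant maps satisfying MLC(1), with each $(X_n,f_n)$ a transitive subshift of finite type, and let $(X,f)=\lim_\pi(X_n,f_n)$ with a metric $d$ compatible with its topology. Let $D_\ast=(D_n)_{n\ge1}\in\mathcal{D}_\pi$ be such that $(\pi_n^{n+1}|_{D_{n+1}}\colon D_{n+1}\to D_n)_{n\ge1}$ satisfies MLC(1), and let $D=[D_\ast]=\{x=(x_n)_{n\ge1}\in X:x_n\in D_n\ \forall n\}$. Then for any $\epsilon>0$ there is $\delta>0$ such that every $\delta$-pseudo orbit $(x^{(i)})_{i\ge0}$ of $f$ with $x^{(0)}\in D$ is $\epsilon$-shadowed by some $x\in D$.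
   Context: Equivariant means $\pi_n^{n+1}$ continuous with $f_n\circ\pi_n^{n+1}=\pi_n^{n+1}\circ f_{n+1}$; $\pi_n^m=\pi_n^{n+1}\circ\cdots\circ\pi_{m-1}^m$. $X=\{(x_n)\in\prod_n X_n:\pi_n^{n+1}(x_{n+1})=x_n\ \forall n\}$ (product topology), $f((x_n))=(f_n(x_n))$. An inverse sequence $(p_n\colon Z_{n+1}\to Z_n)$ satisfies MLC(1) if $p_n(Z_{n+1})=p_n(p_{n+1}(Z_{n+2}))$ for all $n$. A subshift of finite type is $(Z,\sigma|_Z)$ with $\sigma$ the shift $(x_i)_{i\ge1}\mapsto(x_{i+1})_{i\ge1}$ on $S^{\mathbb N}$, $S$ finite, and $Z=\{x:(x_i,\dots,x_{i+N})\in F\ \forall i\}$ for some $N>0$, $F\subset S^{N+1}$; transitive means for nonempty open $U,V$ some $k>0$ has $\sigma^k(U)\cap V\neq\emptyset$. For a chain transitive map $g$ of a compact metric space: a $\delta$-chain is $(y_i)_{i=0}^k$, $k>0$, with $d(g(y_i),y_{i+1})\le\delta$, a $\delta$-cycle of length $k$ if $y_0=y_k$; $m(g,\delta)$ is the gcd of lengths of $\delta$-cycles; $y\sim_{g,\delta}z$ iff a $\delta$-chain from $y$ to $z$ of length divisible by $m(g,\delta)$ exists; $y\sim_g z$ iff $y\sim_{g,\delta}z$ for all $\delta$; $\mathcal{D}(g)$ is the set of its equivalence classes. $\mathcal{D}_\pi=\{(D_n)\in\prod_n\mathcal{D}(f_n):\pi_n^{n+1}(D_{n+1})\subset D_n\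 \forall n\}$. A $\delta$-pseudo orbit of $f$ is $(x^{(i)})_{i\ge0}$ with $d(f(x^{(i)}),x^{(i+1)})\le\delta$ for all $i$; it is $\epsilon$-shadowed by $x$ if $d(f^i(x),x^{(i)})\le\epsilon$ for all $i\ge0$. *)

(* Defs.v *)
From Stdlib Require Export Reals List Arith.
Open Scope R_scope.

Definition shift {A : Type} (x : nat -> A) : nat -> A := fun i => x (S i).

Definition agree {A : Type} (k : nat) (x y : nat -> A) : Prop :=
  forall i, (i < k)%nat -> x i = y i.

Definition finite_type (A : Type) : Prop := exists l : list A, forall a, In a l.

Definition word {A : Type} (x : nat -> A) (i N : nat) : list A :=
  map (fun j => x (i + j)%nat) (seq 0 (N + 1)).

(** Z is a subshift of finite type: S finite, Z = {x : (x_i..x_{i+N}) in F for all i},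
    N > 0, F a set of words (automatically finite since A is finite). *)
Definition is_SFT {A : Type} (Z : (nat -> A) -> Prop) : Prop :=
  finite_type A /\
  exists (N : nat) (F : list A -> Prop), (0 < N)%nat /\
    forall x, Z x <-> forall i, F (word x i N).

(** U is open in Z (subspace of the product of discrete topologies). *)
Definition rel_open {A : Type} (Z U : (nat -> A) -> Prop) : Prop :=
  (forall x, U x -> Z x) /\
  forall x, U x -> exists m, forall y, Z y -> agree m x y -> U y.

Definition transitive_SFT {A : Type} (Z : (nat -> A) -> Prop) : Prop :=
  is_SFT Z /\
  forall U V, rel_open Z U -> rel_open Z V ->
    (exists x, U x) -> (exists x, V x) ->
    exists k, (0 < k)%nat /\ exists x, U x /\ V (Nat.iter k shift x).

(** Standard metric on A^N: d(x,y) = (1/2)^m, m the first index where x, y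
    differ (0 if x = y).  [dist_le d x y] says d(x,y) <= delta. *)
Definition dist_le {A : Type} (delta : R) (x y : nat -> A) : Prop :=
  forall i, x i <> y i -> (/ 2) ^ i <= delta.

Definition chain {A : Type} (Z : (nat -> A) -> Prop) (delta : R)
    (y : nat -> (nat -> A)) (k : nat) : Prop :=
  (0 < k)%nat /\ (forall i, (i <= k)%nat -> Z (y i)) /\
  (forall i, (i < k)%nat -> dist_le delta (shift (y i)) (y (S i))).

Definition is_cycle_gcd {A : Type} (Z : (nat -> A) -> Prop) (delta : R) (m : nat) : Prop :=
  (forall y k, chain Z delta y k -> y 0%nat = y k -> Nat.divide m k) /\
  (forall c, (forall y k, chain Z delta y k -> y 0%nat = y k -> Nat.divide c k) ->
     Nat.divide c m).

Definition chain_rel {A : Type} (Z : (nat -> A) -> Prop) (delta : R) (a b : nat -> A) : Prop :=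
  exists m, is_cycle_gcd Z delta m /\
  exists y k, chain Z delta y k /\ y 0%nat = a /\ y k = b /\ Nat.divide m k.

Definition chain_equiv {A : Type} (Z : (nat -> A) -> Prop) (a b : nat -> A) : Prop :=
  forall delta, 0 < delta -> chain_rel Z delta a b.

Definition is_chain_class {A : Type} (Z D : (nat -> A) -> Prop) : Prop :=
  exists a, Z a /\ forall b, D b <-> (Z b /\ chain_equiv Z a b).

(** Bonding maps p n = pi_n^{n+1} : X_{n+1} -> X_n (given on the ambient full
    shift; only their values on X_{n+1} matter). *)
Definition equivariant_seq (S : nat -> Type) (X : forall n, (nat -> S n) -> Prop)
    (p : forall n, (nat -> S (Datatypes.S n)) -> (nat -> S n)) : Prop :=
  forall n,
    (forall y, X (Datatypes.S n) y -> X n (p n y)) /\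
    (forall y, X (Datatypes.S n) y -> forall m, exists m', forall z,
        X (Datatypes.S n) z -> agree m' y z -> agree m (p n y) (p n z)) /\
    (forall y, X (Datatypes.S n) y -> p n (shift y) = shift (p n y)).

Definition MLC1 (S : nat -> Type) (Z : forall n, (nat -> S n) -> Prop)
    (p : forall n, (nat -> S (Datatypes.S n)) -> (nat -> S n)) : Prop :=
  forall n (z : nat -> S n),
    (exists y, Z (Datatypes.S n) y /\ p n y = z) <->
    (exists w, Z (Datatypes.S (Datatypes.S n)) w /\ p n (p (Datatypes.S n) w) = z).

Definition LimPt (S : nat -> Type) : Type := forall n, nat -> S n.

Definition inLim (S : nat -> Type) (X : forall n, (nat -> S n) -> Prop)
    (p : forall n, (nat -> S (Datatypes.S n)) -> (nat -> S n)) (x : LimPt S) : Prop :=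
  forall n, X n (x n) /\ p n (x (Datatypes.S n)) = x n.

Definition limf {S : nat -> Type} (x : LimPt S) : LimPt S := fun n => shift (x n).

Definition is_metric_on {T : Type} (P : T -> Prop) (d : T -> T -> R) : Prop :=
  (forall x y, P x -> P y -> 0 <= d x y) /\
  (forall x y, P x -> P y -> (d x y = 0 <-> x = y)) /\
  (forall x y, P x -> P y -> d x y = d y x) /\
  (forall x y z, P x -> P y -> P z -> d x z <= d x y + d y z).

(** Basic neighbourhood of x in the product topology: finitely many coordinates
    n, each constrained to the cylinder of length k of x_n. *)
Definition cyl_nbhd {S : nat -> Type} (x : LimPt S) (L : list (nat * nat)) (y : LimPt S) : Prop :=
  forall nk, In nk L -> agree (snd nk) (y (fst nk)) (x (fst nk)).

(** d induces on P the (subspace of the) product topology: every ball contains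
    a basic neighbourhood and every basic neighbourhood contains a ball. *)
Definition compatible_metric {S : nat -> Type} (P : LimPt S -> Prop)
    (d : LimPt S -> LimPt S -> R) : Prop :=
  (forall x, P x -> forall e, 0 < e -> exists L,
      forall y, P y -> cyl_nbhd x L y -> d x y < e) /\
  (forall x, P x -> forall L, exists e, 0 < e /\
      forall y, P y -> d x y < e -> cyl_nbhd x L y).

Definition in_D_pi (S : nat -> Type) (X : forall n, (nat -> S n) -> Prop)
    (p : forall n, (nat -> S (Datatypes.S n)) -> (nat -> S n))
    (Ds : forall n, (nat -> S n) -> Prop) : Prop :=
  forall n, is_chain_class (X n) (Ds n) /\
    (forall y, Ds (Datatypes.S n) y -> Ds n (p n y)).

Definition bracket (S : nat -> Type) (X : forall n, (nat -> S n) -> Prop)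
    (p : forall n, (nat -> S (Datatypes.S n)) -> (nat -> S n))
    (Ds : forall n, (nat -> S n) -> Prop) (x : LimPt S) : Prop :=
  inLim S X p x /\ forall n, Ds n (x n).

(* Main.v *)
Require Import Defs.
From Stdlib Require Import Reals Lra Lia Arith List Classical ClassicalEpsilon FunctionalExtensionality.
Open Scope R_scope.

Lemma agree_mon {A} (m m' : nat) (x y : nat -> A) : (m' <= m)%nat -> agree m x y -> agree m' x y.
Proof. intros H Ha i Hi. apply Ha. lia. Qed.
Lemma agree_sym {A} m (x y : nat -> A) : agree m x y -> agree m y x.
Proof. intros H i Hi. symmetry. auto. Qed.
Lemma agree_trans {A} m (x y z : nat -> A) : agree m x y -> agree m y z -> agree m x z.
Proof. intros H1 H2 i Hi. rewrite H1; auto. Qed.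

Lemma iter_shift {A} k (x : nat -> A) : Nat.iter k shift x = fun j => x (k + j)%nat.
Proof. induction k; simpl. reflexivity. rewrite IHk. apply functional_extensionality.
  intro j. unfold shift. f_equal. lia. Qed.

Lemma word_ext {A} (x y : nat -> A) i j N :
  (forall s, (s <= N)%nat -> x (i+s)%nat = y (j+s)%nat) -> word x i N = word y j N.
Proof. intros H. unfold word. apply map_ext_in. intros a Ha. apply in_seq in Ha. apply H. lia. Qed.

Lemma sft_local {A} (Z : (nat->A)->Prop) N F : (forall x, Z x <-> forall i, F (word x i N)) ->
  forall v, (forall i, exists t j, Z t /\ forall s, (s <= N)%nat -> v (i+s)%nat = t (j+s)%nat) -> Z v.
Proof. intros HZ v H. apply HZ. intros i. destruct (H i) as [t [j [Zt Ht]]].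
  rewrite (word_ext v t i j N Ht). apply HZ. exact Zt. Qed.

Lemma sft_shift {A} (Z : (nat->A)->Prop) : is_SFT Z -> forall x, Z x -> Z (shift x).
Proof. intros [_ [N [F [_ HZ]]]] x Hx. apply (sft_local Z N F HZ).
  intros i. exists x, (Datatypes.S i). split; auto. Qed.

Lemma sft_iter {A} (Z : (nat->A)->Prop) : is_SFT Z -> forall k x, Z x -> Z (Nat.iter k shift x).
Proof. intros H k. induction k; intros x Hx; simpl; auto. apply sft_shift; auto. Qed.

Lemma sft_closed {A} (Z : (nat->A)->Prop) : is_SFT Z -> forall c,
  (forall B, exists t, Z t /\ agree B t c) -> Z c.
Proof. intros [_ [N [F [_ HZ]]]] c H. apply (sft_local Z N F HZ).
  intros i. destruct (H (i + N + 1)%nat) as [t [Zt Ht]]. exists t, i. split; auto.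
  intros s Hs. symmetry. apply Ht. lia. Qed.

Lemma dist_le_refl {A} δ (a : nat -> A) : dist_le δ a a.
Proof. intros i H. contradiction. Qed.

Lemma half_pow_mono R i : (R <= i)%nat -> (/2)^i <= (/2)^R.
Proof. intros H. replace i with (R + (i - R))%nat by lia. rewrite pow_add.
  assert (0 < (/2)^R) by (apply pow_lt; lra).
  assert ((/2)^(i-R) <= 1). { rewrite <- (pow1 (i-R)). apply pow_incr. lra. }
  nra. Qed.

Lemma half_pow_small δ N0 : 0 < δ -> exists R, (N0 <= R)%nat /\ (/2)^R <= δ.
Proof. intros Hd. assert (Hh : Rabs (/2) < 1) by (rewrite Rabs_pos_eq; lra).
  destruct (pow_lt_1_zero (/2) Hh δ Hd) as [M HM].
  exists (max N0 M). split. lia. specialize (HM (max N0 M) ltac:(lia)).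
  rewrite Rabs_pos_eq in HM. lra. apply pow_le. lra. Qed.

Lemma agree_dist {A} R δ (a b : nat -> A) : agree R a b -> (/2)^R <= δ -> dist_le δ a b.
Proof. intros Ha Hd i Hne. destruct (lt_dec i R). exfalso; apply Hne; auto.
  apply Rle_trans with ((/2)^R); [apply half_pow_mono; lia | exact Hd]. Qed.

Definition infinite (I : nat -> Prop) := forall K, exists k, (K <= k)%nat /\ I k.

Lemma pigeon {A} (l : list A) : forall (I : nat -> Prop) (f : nat -> A), infinite I ->
  (forall k, I k -> In (f k) l) -> exists a, infinite (fun k => I k /\ f k = a).
Proof.
  induction l as [|a l IH]; intros I f HI Hl.
  - destruct (HI 0%nat) as [k [_ Hk]]. destruct (Hl k Hk).
  - destruct (classic (infinite (fun k => I k /\ f k = a))) as [H|H].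
    + exists a; exact H.
    + unfold infinite in H. apply not_all_ex_not in H. destruct H as [K0 HK0].
      destruct (IH (fun k => I k /\ (K0 <= k)%nat) f) as [b Hb].
      * intros K. destruct (HI (max K K0)) as [k [Hk1 Hk2]]. exists k. split; [lia|split; auto; lia].
      * intros k [Hk1 Hk2]. destruct (Hl k Hk1) as [E|E]; auto.
        exfalso. apply HK0. exists k. split; auto.
      * exists b. intros K. destruct (Hb K) as [k [Hk [[H1 _] H2]]]. exists k; auto.
Qed.

Definition agreeB {T : nat -> Type} (B : nat) (x y : forall n, nat -> T n) : Prop :=
  forall n, (n < B)%nat -> agree B (x n) (y n).

Lemma agreeB_mon {T : nat -> Type} B B' (x y : forall n, nat -> T n) :
  (B' <= B)%nat -> agreeB B x y -> agreeB B' x y.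
Proof. intros H Ha n Hn. apply (agree_mon B). lia. apply Ha. lia. Qed.
Lemma agreeB_sym {T : nat -> Type} B (x y : forall n, nat -> T n) : agreeB B x y -> agreeB B y x.
Proof. intros H n Hn. apply agree_sym. auto. Qed.
Lemma agreeB_trans {T : nat -> Type} B (x y z : forall n, nat -> T n) :
  agreeB B x y -> agreeB B y z -> agreeB B x z.
Proof. intros H1 H2 n Hn. eapply agree_trans; eauto. Qed.

Lemma refine_coords (T : nat -> Type) (HT : forall n, finite_type (T n))
  (s : nat -> forall n, nat -> T n) (cs : list (nat*nat)) : forall (I : nat -> Prop),
  infinite I -> exists k0, I k0 /\ infinite (fun k => I k /\
    forall c, In c cs -> s k (fst c) (snd c) = s k0 (fst c) (snd c)).
Proof.
  induction cs as [|c cs IH]; intros I HI.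
  - destruct (HI 0%nat) as [k0 [_ Hk0]]. exists k0. split; auto.
    intros K. destruct (HI K) as [k [Hk1 Hk2]]. exists k. split; auto. split; auto.
    intros c []. 
  - destruct (HT (fst c)) as [l Hl].
    destruct (pigeon l I (fun k => s k (fst c) (snd c)) HI (fun k _ => Hl _)) as [a Ha].
    destruct (IH _ Ha) as [k0 [[Hk0 Ek0] Hinf]].
    exists k0. split; auto. intros K. destruct (Hinf K) as [k [Hk [[H1 H2] H3]]].
    exists k. split; auto. split; auto. intros c' [E|E].
    + subst c'. simpl in *. congruence.
    + auto.
Qed.

Lemma refine_block (T : nat -> Type) (HT : forall n, finite_type (T n))
  (s : nat -> forall n, nat -> T n) (I : nat -> Prop) (HI : infinite I) (B K : nat) :
  exists k0, I k0 /\ (K <= k0)%nat /\ infinite (fun k => I k /\ agreeB B (s k) (s k0)).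
Proof.
  destruct (refine_coords T HT s (list_prod (seq 0 B) (seq 0 B)) (fun k => I k /\ (K <= k)%nat))
    as [k0 [[H1 H2] H3]].
  { intros K'. destruct (HI (max K K')) as [k [Hk1 Hk2]]. exists k. split; [lia|split; auto; lia]. }
  exists k0. split; auto. split; auto. intros K'. destruct (H3 K') as [k [Hk [[Ik _] Hc]]].
  exists k. split; auto. split; auto. intros n Hn i Hi.
  apply (Hc (n, i)). apply in_prod; apply in_seq; lia.
Qed.

Definition infset := {I : nat -> Prop | infinite I}.

Lemma inf_True : infinite (fun _ => True).
Proof. intros K. exists K. auto. Qed.

Definition stepk (T : nat -> Type) (HT : forall n, finite_type (T n))
  (s : nat -> forall n, nat -> T n) (j : nat) (I : infset) :
  {k0 : nat | proj1_sig I k0 /\ (j <= k0)%nat /\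
     infinite (fun k => proj1_sig I k /\ agreeB j (s k) (s k0))} :=
  constructive_indefinite_description _ (refine_block T HT s (proj1_sig I) (proj2_sig I) j j).

Fixpoint Iseq (T : nat -> Type) (HT : forall n, finite_type (T n))
  (s : nat -> forall n, nat -> T n) (j : nat) : infset :=
  match j with
  | O => exist _ (fun _ => True) inf_True
  | Datatypes.S j' =>
      exist _ (fun k => proj1_sig (Iseq T HT s j') k /\
                 agreeB j' (s k) (s (proj1_sig (stepk T HT s j' (Iseq T HT s j')))))
        (proj2 (proj2 (proj2_sig (stepk T HT s j' (Iseq T HT s j')))))
  end.

Definition kseq T HT s j := proj1_sig (stepk T HT s j (Iseq T HT s j)).

Lemma kseq_in T HT s j : proj1_sig (Iseq T HT s j) (kseq T HT s j).
Proof. unfold kseq. exact (proj1 (proj2_sig (stepk T HT s j (Iseq T HT s j)))). Qed.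
Lemma kseq_ge T HT s j : (j <= kseq T HT s j)%nat.
Proof. unfold kseq. exact (proj1 (proj2 (proj2_sig (stepk T HT s j (Iseq T HT s j))))). Qed.

Lemma Iseq_agree T HT s j t k : proj1_sig (Iseq T HT s (Datatypes.S (j + t))) k ->
  agreeB j (s k) (s (kseq T HT s j)).
Proof.
  revert k. induction t; intros k Hk.
  - rewrite Nat.add_0_r in Hk. simpl in Hk. destruct Hk as [_ H]. exact H.
  - rewrite Nat.add_succ_r in Hk. simpl in Hk. destruct Hk as [Hk _]. apply IHt. exact Hk.
Qed.

Lemma cluster (T : nat -> Type) (HT : forall n, finite_type (T n))
  (s : nat -> forall n, nat -> T n) :
  exists c : forall n, nat -> T n, forall B K, exists k, (K <= k)%nat /\ agreeB B (s k) c.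
Proof.
  exists (fun n i => s (kseq T HT s (Datatypes.S (n + i))) n i).
  intros B K. exists (kseq T HT s (B + B + K + 1)). split.
  { pose proof (kseq_ge T HT s (B + B + K + 1)). lia. }
  intros n Hn i Hi.
  set (m := Datatypes.S (n + i)).
  assert (Hm : proj1_sig (Iseq T HT s (Datatypes.S (m + (B + B + K + 1 - m - 1))))
              (kseq T HT s (B + B + K + 1))).
  { replace (Datatypes.S (m + (B + B + K + 1 - m - 1))) with (B + B + K + 1)%nat
      by (unfold m; lia). apply kseq_in. }
  apply (Iseq_agree _ _ _ _ _ _ Hm); unfold m; lia.
Qed.

Lemma cluster1 {A} (HA : finite_type A) (s : nat -> nat -> A) :
  exists c, forall B K, exists k, (K <= k)%nat /\ agree B (s k) c.
Proof.
  destruct (cluster (fun _ => A) (fun _ => HA) (fun k _ => s k)) as [c Hc].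
  exists (c 0%nat). intros B K. destruct (Hc (Datatypes.S B) K) as [k [Hk H]].
  exists k. split; auto. apply (agree_mon (Datatypes.S B)). lia. apply H. lia.
Qed.


Lemma fin_of (S : nat -> Type) (X : forall n, (nat -> S n) -> Prop)
  (HX : forall n, transitive_SFT (X n)) : forall n, finite_type (S n).
Proof. intros n. exact (proj1 (proj1 (HX n))). Qed.

Lemma inLim_closed (S : nat -> Type) (X : forall n, (nat -> S n) -> Prop)
  (p : forall n, (nat -> S (Datatypes.S n)) -> (nat -> S n))
  (HX : forall n, transitive_SFT (X n)) (Hp : equivariant_seq S X p)
  (s : nat -> LimPt S) (Hs : forall k, inLim S X p (s k)) (c : LimPt S)
  (Hc : forall B K, exists k, (K <= k)%nat /\ agreeB B (s k) c) : inLim S X p c.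
Proof.
  assert (HXc : forall n, X n (c n)).
  { intros n. apply sft_closed. exact (proj1 (HX n)). intros B.
    destruct (Hc (Datatypes.S (n + B)) 0%nat) as [k [_ Hk]]. exists (s k n). split.
    apply (Hs k). apply (agree_mon (Datatypes.S (n + B))). lia. apply Hk. lia. }
  intros n. split; auto. apply functional_extensionality. intros i.
  destruct (Hp n) as [_ [Hcont _]].
  destruct (Hcont (c (Datatypes.S n)) (HXc _) (Datatypes.S i)) as [m' Hm'].
  destruct (Hc (Datatypes.S (Datatypes.S n + m' + i)) 0%nat) as [k [_ Hk]].
  assert (H1 := Hm' (s k (Datatypes.S n)) (proj1 (Hs k _))).
  rewrite (proj2 (Hs k n)) in H1.
  assert (H2 : agree m' (c (Datatypes.S n)) (s k (Datatypes.S n))).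
  { apply agree_sym. apply (agree_mon (Datatypes.S (Datatypes.S n + m' + i))). lia. apply Hk. lia. }
  specialize (H1 H2). rewrite (H1 i ltac:(lia)). apply Hk; lia.
Qed.

Lemma block_of (S : nat -> Type) (L : list (nat * nat)) : exists B0, forall (x y : LimPt S),
  agreeB B0 y x -> cyl_nbhd x L y.
Proof.
  induction L as [|[n k] L IH].
  - exists 0%nat. intros x y _ nk [].
  - destruct IH as [B1 HB1]. exists (max B1 (max (Datatypes.S n) k)). intros x y H nk [E|E].
    + subst nk. simpl. apply (agree_mon (max B1 (max (Datatypes.S n) k))). lia. apply H. lia.
    + apply (HB1 x y). apply (agreeB_mon (max B1 (max (Datatypes.S n) k))). lia. auto. auto.
Qed.

Lemma unif_a (S : nat -> Type) (X : forall n, (nat -> S n) -> Prop)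
  (p : forall n, (nat -> S (Datatypes.S n)) -> (nat -> S n))
  (HX : forall n, transitive_SFT (X n)) (Hp : equivariant_seq S X p)
  (d : LimPt S -> LimPt S -> R) (Hd : is_metric_on (inLim S X p) d)
  (Hdc : compatible_metric (inLim S X p) d) :
  forall e, 0 < e -> exists B, forall x y, inLim S X p x -> inLim S X p y ->
    agreeB B x y -> d x y < e.
Proof.
  intros e He. apply NNPP. intro Hno.
  assert (H : forall B, exists xy : LimPt S * LimPt S, inLim S X p (fst xy) /\
     inLim S X p (snd xy) /\ agreeB B (fst xy) (snd xy) /\ ~ d (fst xy) (snd xy) < e).
  { intros B. apply NNPP. intro H1. apply Hno. exists B. intros x y Hx Hy HB.
    apply NNPP. intro H2. apply H1. exists (x, y). simpl. auto. }
  set (sel := fun B => proj1_sig (constructive_indefinite_description _ (H B))).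
  assert (Hsel : forall B, inLim S X p (fst (sel B)) /\
     inLim S X p (snd (sel B)) /\ agreeB B (fst (sel B)) (snd (sel B)) /\
     ~ d (fst (sel B)) (snd (sel B)) < e).
  { intros B. unfold sel. exact (proj2_sig (constructive_indefinite_description _ (H B))). }
  destruct (cluster S (fin_of S X HX) (fun B => fst (sel B))) as [c Hc].
  assert (Hcl : inLim S X p c).
  { apply (inLim_closed S X p HX Hp (fun B => fst (sel B))); auto. intros k; apply Hsel. }
  destruct Hdc as [Hdc1 _].
  destruct (Hdc1 c Hcl (e/2)) as [L HL]. lra.
  destruct (block_of S L) as [B0 HB0].
  destruct (Hc B0 B0) as [k [Hk Hak]]. simpl in Hak.
  destruct (Hsel k) as [Hx [Hy [Hxy Hn]]].
  assert (Hyc : agreeB B0 (snd (sel k)) c).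
  { apply agreeB_trans with (fst (sel k)); auto. apply agreeB_sym.
    apply (agreeB_mon k). lia. auto. }
  assert (d1 := HL _ Hx (HB0 _ _ (Hak))).
  assert (d2 := HL _ Hy (HB0 _ _ Hyc)).
  destruct Hd as [_ [_ [Hsym Htri]]].
  apply Hn. pose proof (Htri _ c _ Hx Hcl Hy). rewrite (Hsym _ c Hx Hcl) in H0. lra.
Qed.

Lemma unif_b (S : nat -> Type) (X : forall n, (nat -> S n) -> Prop)
  (p : forall n, (nat -> S (Datatypes.S n)) -> (nat -> S n))
  (HX : forall n, transitive_SFT (X n)) (Hp : equivariant_seq S X p)
  (d : LimPt S -> LimPt S -> R) (Hd : is_metric_on (inLim S X p) d)
  (Hdc : compatible_metric (inLim S X p) d) :
  forall B, exists e, 0 < e /\ forall x y, inLim S X p x -> inLim S X p y ->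
    d x y < e -> agreeB B x y.
Proof.
  intros B. apply NNPP. intro Hno.
  assert (H : forall k : nat, exists xy : LimPt S * LimPt S, inLim S X p (fst xy) /\
     inLim S X p (snd xy) /\ d (fst xy) (snd xy) < / (INR k + 1) /\ ~ agreeB B (fst xy) (snd xy)).
  { intros k. apply NNPP. intro H1. apply Hno. exists (/ (INR k + 1)). split.
    apply Rinv_0_lt_compat. pose proof (pos_INR k). lra.
    intros x y Hx Hy HB.
    apply NNPP. intro H2. apply H1. exists (x, y). simpl. auto. }
  set (sel := fun B => proj1_sig (constructive_indefinite_description _ (H B))).
  assert (Hsel : forall k, inLim S X p (fst (sel k)) /\
     inLim S X p (snd (sel k)) /\ d (fst (sel k)) (snd (sel k)) < / (INR k + 1) /\
     ~ agreeB B (fst (sel k)) (snd (sel k))).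
  { intros k. unfold sel. exact (proj2_sig (constructive_indefinite_description _ (H k))). }
  destruct (cluster S (fin_of S X HX) (fun k => fst (sel k))) as [c Hc].
  assert (Hcl : inLim S X p c).
  { apply (inLim_closed S X p HX Hp (fun k => fst (sel k))); auto. intros k; apply Hsel. }
  destruct Hdc as [Hdc1 Hdc2].
  destruct (Hdc2 c Hcl (map (fun n => (n, B)) (seq 0 B))) as [e' [He' HL']].
  destruct (Hdc1 c Hcl (e'/2)) as [L HL]. lra.
  destruct (block_of S L) as [B0 HB0].
  destruct (archimed_cor1 (e'/2)) as [N [HN HN0]]. lra.
  destruct (Hc B0 N) as [k [Hk Hak]]. simpl in Hak.
  destruct (Hsel k) as [Hx [Hy [Hxy Hn]]].
  assert (d1 := HL _ Hx (HB0 _ _ (Hak))).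
  assert (Hk' : / (INR k + 1) < e' / 2).
  { apply Rle_lt_trans with (/ INR N); auto. apply Rinv_le_contravar.
    apply lt_0_INR; lia. apply le_INR in Hk. lra. }
  destruct Hd as [_ [_ [Hsym Htri]]].
  assert (d2 : d c (snd (sel k)) < e').
  { pose proof (Htri c _ _ Hcl Hx Hy). lra. }
  assert (d1' : d c (fst (sel k)) < e') by lra.
  assert (Hcyl : forall y, cyl_nbhd c (map (fun n => (n, B)) (seq 0 B)) y -> agreeB B y c).
  { intros y Hy' n Hn'. apply (Hy' (n, B)). apply in_map_iff. exists n. split; auto.
    apply in_seq. lia. }
  apply Hn. apply agreeB_trans with c. apply Hcyl. apply HL'; auto.
  apply agreeB_sym. apply Hcyl. apply HL'; auto.
Qed.

Lemma unif_p (S : nat -> Type) (X : forall n, (nat -> S n) -> Prop)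
  (p : forall n, (nat -> S (Datatypes.S n)) -> (nat -> S n))
  (HX : forall n, transitive_SFT (X n)) (Hp : equivariant_seq S X p) :
  forall n m, exists m', forall y z, X (Datatypes.S n) y -> X (Datatypes.S n) z ->
    agree m' y z -> agree m (p n y) (p n z).
Proof.
  intros n m. apply NNPP. intro Hno.
  assert (H : forall k : nat, exists yz, X (Datatypes.S n) (fst yz) /\ X (Datatypes.S n) (snd yz)
     /\ agree k (fst yz) (snd yz) /\ ~ agree m (p n (fst yz)) (p n (snd yz))).
  { intros k. apply NNPP. intro H1. apply Hno. exists k. intros y z Hy Hz Hyz.
    apply NNPP. intro H2. apply H1. exists (y, z). simpl. auto. }
  set (sel := fun k => proj1_sig (constructive_indefinite_description _ (H k))).
  assert (Hsel : forall k, X (Datatypes.S n) (fst (sel k)) /\ X (Datatypes.S n) (snd (sel k))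
     /\ agree k (fst (sel k)) (snd (sel k)) /\ ~ agree m (p n (fst (sel k))) (p n (snd (sel k)))).
  { intros k. unfold sel. exact (proj2_sig (constructive_indefinite_description _ (H k))). }
  destruct (cluster1 (fin_of S X HX (Datatypes.S n)) (fun k => fst (sel k))) as [c Hc].
  assert (HXc : X (Datatypes.S n) c).
  { apply sft_closed. exact (proj1 (HX _)). intros B. destruct (Hc B 0%nat) as [k [_ Hk]].
    exists (fst (sel k)). split; auto. apply Hsel. }
  destruct (Hp n) as [_ [Hcont _]].
  destruct (Hcont c HXc m) as [m0 Hm0].
  destruct (Hc m0 m0) as [k [Hk Hak]]. simpl in Hak.
  destruct (Hsel k) as [Hy [Hz [Hyz Hn]]].
  apply Hn. apply agree_trans with (p n c).
  apply agree_sym. apply Hm0; auto. apply agree_sym; auto.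
  apply Hm0; auto. apply agree_trans with (fst (sel k)). apply agree_sym; auto.
  apply (agree_mon k); auto.
Qed.

Lemma downprec (S : nat -> Type) (X : forall n, (nat -> S n) -> Prop)
  (p : forall n, (nat -> S (Datatypes.S n)) -> (nat -> S n))
  (HX : forall n, transitive_SFT (X n)) (Hp : equivariant_seq S X p) :
  forall T B, exists r, (B <= r)%nat /\ forall x y, inLim S X p x -> inLim S X p y ->
    agree r (x T) (y T) -> forall n, (n <= T)%nat -> agree B (x n) (y n).
Proof.
  induction T; intros B.
  - exists B. split; auto. intros x y _ _ H n Hn. destruct n; [auto | lia].
  - destruct (IHT B) as [r' [Hr' Hr]].
    destruct (unif_p S X p HX Hp T r') as [g Hg].
    exists (max B (max g r')). split. lia. intros x y Hx Hy H n Hn.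
    destruct (Nat.eq_dec n (Datatypes.S T)) as [E|E].
    + subst n. apply (agree_mon (max B (max g r'))). lia. auto.
    + apply (Hr x y Hx Hy); [|lia].
      rewrite <- (proj2 (Hx T)), <- (proj2 (Hy T)). apply Hg.
      apply Hx. apply Hy. apply (agree_mon (max B (max g r'))). lia. auto.
Qed.

Lemma chain_concat {A} (Z : (nat -> A) -> Prop) δ c1 k1 c2 k2 :
  chain Z δ c1 k1 -> chain Z δ c2 k2 -> c1 k1 = c2 0%nat ->
  chain Z δ (fun i => if Nat.leb i k1 then c1 i else c2 (i - k1)%nat) (k1 + k2).
Proof.
  intros [H1a [H1b H1c]] [H2a [H2b H2c]] E. split; [lia|split].
  - intros i Hi. destruct (Nat.leb_spec i k1). auto. apply H2b. lia.
  - intros i Hi. destruct (Nat.leb_spec i k1); destruct (Nat.leb_spec (Datatypes.S i) k1).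
    + auto.
    + assert (i = k1) by lia. subst i. rewrite E.
      replace (Datatypes.S k1 - k1)%nat with 1%nat by lia. apply H2c. lia.
    + lia.
    + replace (Datatypes.S i - k1)%nat with (Datatypes.S (i - k1)) by lia. apply H2c. lia.
Qed.

Lemma trans_sft_path {A} (Z : (nat -> A) -> Prop) (HZ : transitive_SFT Z) N F
  (HZF : forall x, Z x <-> forall i, F (word x i N)) δ (Hδ : 0 < δ) (m : nat)
  (Hm : forall y k, chain Z δ y k -> y 0%nat = y k -> Nat.divide m k)
  u y (Zu : Z u) (Zy : Z y) (Huy : agree (Datatypes.S N) u y) :
  exists c A, chain Z δ c A /\ c 0%nat = u /\ c A = y /\ Nat.divide m A.
Proof.
  destruct (half_pow_small δ (Datatypes.S N) Hδ) as [R [HR HRd]].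
  assert (HS : is_SFT Z) by apply HZ.
  destruct HZ as [_ Htr].
  destruct (Htr (fun x => Z x /\ agree R (shift u) x) (fun x => Z x /\ agree R y x))
    as [k [Hk [x [[Zx Ux] [_ Vx]]]]].
  - split. intros x [H _]; auto. intros x [Zx Hx]. exists R. intros y' Zy' H'. split; auto.
    eapply agree_trans; eauto.
  - split. intros x [H _]; auto. intros x [Zx Hx]. exists R. intros y' Zy' H'. split; auto.
    eapply agree_trans; eauto.
  - exists (shift u). split. apply sft_shift; auto. intros i _; auto.
  - exists y. split; auto. intros i _; auto.
  - rewrite iter_shift in Vx.
    set (w := fun j => match j with O => u 0%nat | Datatypes.S j' =>
                 if Nat.ltb j' k then x j' else y (j' - k)%nat end).
    assert (wS1 : forall j, (j < k + R)%nat -> w (Datatypes.S j) = x j).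
    { intros j Hj. simpl. destruct (Nat.ltb_spec j k). auto.
      rewrite (Vx (j - k)%nat) by lia. f_equal. lia. }
    assert (wS2 : forall j, (k <= j)%nat -> w (Datatypes.S j) = y (j - k)%nat).
    { intros j Hj. simpl. destruct (Nat.ltb_spec j k). lia. auto. }
    assert (wu : forall j, (j <= R)%nat -> w j = u j).
    { intros [|j] Hj. reflexivity. rewrite wS1 by lia. symmetry. apply (Ux j). lia. }
    assert (wZ : Z w).
    { apply (sft_local Z N F HZF). intros [|i].
      - exists u, 0%nat. split; auto. intros s Hs. simpl. apply wu. lia.
      - destruct (Nat.ltb_spec i k).
        + exists x, i. split; auto. intros s Hs. simpl plus. rewrite wS1 by lia. reflexivity.
        + exists y, (i - k)%nat. split; auto. intros s Hs. simpl plus. rewrite wS2 by lia.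
          f_equal. lia. }
    assert (wshift : Nat.iter (Datatypes.S k) shift w = y).
    { rewrite iter_shift. apply functional_extensionality. intros j.
      simpl plus. rewrite wS2 by lia. f_equal. lia. }
    assert (per : forall l, (l < Datatypes.S k + Datatypes.S N)%nat ->
               w l = w (l mod (Datatypes.S k))%nat).
    { intros l. induction l as [l IH] using lt_wf_ind. intros Hl.
      destruct (lt_dec l (Datatypes.S k)).
      - rewrite Nat.mod_small; auto.
      - set (t := (l - Datatypes.S k)%nat).
        assert (El : l = (t + 1 * Datatypes.S k)%nat) by (unfold t; lia).
        rewrite El, Nat.Div0.mod_add.
        replace (t + 1 * Datatypes.S k)%nat with (Datatypes.S (k + t)) by lia.
        rewrite wS2 by lia. replace (k + t - k)%nat with t by lia.
        rewrite <- (Huy t) by (unfold t; lia). rewrite <- wu by (unfold t; lia).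
        apply IH; unfold t; lia. }
    set (z := fun j => w (j mod Datatypes.S k)%nat).
    assert (zZ : Z z).
    { apply (sft_local Z N F HZF). intros i. exists w, (i mod Datatypes.S k)%nat.
      split; auto. intros s Hs. unfold z.
      rewrite (per (i mod Datatypes.S k + s)%nat).
      rewrite Nat.Div0.add_mod_idemp_l. reflexivity.
      pose proof (Nat.mod_upper_bound i (Datatypes.S k)). lia. }
    assert (zper : Nat.iter (Datatypes.S k) shift z = z).
    { rewrite iter_shift. apply functional_extensionality. intros j. unfold z.
      replace (Datatypes.S k + j)%nat with (j + 1 * Datatypes.S k)%nat by lia.
      rewrite Nat.Div0.mod_add. reflexivity. }
    assert (Hdiv : Nat.divide m (Datatypes.S k)).
    { apply (Hm (fun i => Nat.iter i shift z)).
      - split. lia. split. intros i _. apply sft_iter; auto. intros i _. apply dist_le_refl.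
      - simpl (Nat.iter 0 shift z). rewrite zper. reflexivity. }
    exists (fun i => match i with O => u | Datatypes.S i' => Nat.iter (Datatypes.S i') shift w end).
    exists (Datatypes.S k). split; [|split; [reflexivity|split; auto]].
    split. lia. split.
    + intros [|i] _. auto. apply sft_iter; auto.
    + intros [|i] _.
      * apply (agree_dist R). intros j Hj. simpl. unfold shift.
        rewrite wS1 by lia. apply (Ux j). lia. auto.
      * apply dist_le_refl.
Qed.

Lemma class_sub {A} (Z D : (nat -> A) -> Prop) : is_chain_class Z D -> forall t, D t -> Z t.
Proof. intros [a [_ H]] t Ht. apply H in Ht. apply Ht. Qed.

Lemma class_open {A} (Z D : (nat -> A) -> Prop) (HZ : transitive_SFT Z) (HD : is_chain_class Z D) :
  exists r, forall u y, D u -> Z y -> agree r u y -> D y.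
Proof.
  destruct (proj1 HZ) as [_ [N [F [HN HZF]]]].
  destruct HD as [a [Za Hiff]].
  exists (Datatypes.S N). intros u y Du Zy Huy. apply Hiff. split; auto.
  apply Hiff in Du. destruct Du as [Zu Hu].
  intros δ Hδ. destruct (Hu δ Hδ) as [m [Hm [c1 [k1 [Hc1 [E0 [E1 Hk1]]]]]]].
  destruct (trans_sft_path Z HZ N F HZF δ Hδ m (proj1 Hm) u y Zu Zy Huy)
    as [c2 [k2 [Hc2 [F0 [F1 Hk2]]]]].
  exists m. split; auto.
  exists (fun i => if Nat.leb i k1 then c1 i else c2 (i - k1)%nat), (k1 + k2)%nat.
  split. apply chain_concat; auto. congruence.
  split. simpl. auto.
  split. destruct (Nat.leb_spec (k1 + k2) k1).
  - destruct Hc2 as [? _]. lia.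
  - replace (k1 + k2 - k1)%nat with k2 by lia. auto.
  - apply Nat.divide_add_r; auto.
Qed.

Lemma sft_shadow {A} (Z : (nat -> A) -> Prop) N F (HZF : forall x, Z x <-> forall i, F (word x i N))
  (ys : nat -> nat -> A) M (HNM : (N <= M)%nat)
  (Hag : forall i, agree M (shift (ys i)) (ys (Datatypes.S i))) (HZ : forall i, Z (ys i)) :
  exists z, Z z /\ forall i, agree (Datatypes.S M) (Nat.iter i shift z) (ys i).
Proof.
  assert (C : forall t i s, (s + t <= M)%nat -> ys (i + t)%nat s = ys i (s + t)%nat).
  { induction t; intros i s Hst.
    - rewrite !Nat.add_0_r. auto.
    - rewrite Nat.add_succ_r. rewrite <- (Hag (i + t)%nat s) by lia. unfold shift.
      rewrite IHt by lia. f_equal. lia. }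
  exists (fun j => ys j 0%nat). split.
  - apply (sft_local Z N F HZF). intros i. exists (ys i), 0%nat. split; auto.
    intros s Hs. rewrite C by lia. reflexivity.
  - intros i. rewrite iter_shift. intros j Hj. simpl. rewrite C by lia. reflexivity.
Qed.

Definition Qp (Sx : nat -> Type) (D : forall n, (nat -> Sx n) -> Prop)
  (p : forall n, (nat -> Sx (Datatypes.S n)) -> (nat -> Sx n)) n (t : nat -> Sx n) : Prop :=
  D n t /\ exists y, D (Datatypes.S n) y /\ p n y = t.

Lemma lift_step (Sx : nat -> Type) (D : forall n, (nat -> Sx n) -> Prop)
  (p : forall n, (nat -> Sx (Datatypes.S n)) -> (nat -> Sx n))
  (H1 : forall n y, D (Datatypes.S n) y -> D n (p n y)) (H2 : MLC1 Sx D p) n t :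
  Qp Sx D p n t -> exists t', Qp Sx D p (Datatypes.S n) t' /\ p n t' = t.
Proof.
  intros [Dt Hy]. destruct (proj1 (H2 n t) Hy) as [w [Dw Ew]].
  exists (p (Datatypes.S n) w). split; auto. split. apply H1; auto. exists w; auto.
Qed.

Definition lift_next Sx D p H1 H2 j (t : {t : nat -> Sx j | Qp Sx D p j t}) :
  {t' | Qp Sx D p (Datatypes.S j) t' /\ p j t' = proj1_sig t} :=
  constructive_indefinite_description _ (lift_step Sx D p H1 H2 j (proj1_sig t) (proj2_sig t)).

Fixpoint liftseq Sx D p H1 H2 (z0 : {t : nat -> Sx 0%nat | Qp Sx D p 0%nat t}) (j : nat) :
  {t : nat -> Sx j | Qp Sx D p j t} :=
  match j with
  | O => z0
  | Datatypes.S j' => exist _ (proj1_sig (lift_next Sx D p H1 H2 j' (liftseq Sx D p H1 H2 z0 j')))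
                          (proj1 (proj2_sig (lift_next Sx D p H1 H2 j' (liftseq Sx D p H1 H2 z0 j'))))
  end.

Lemma thread_from T : forall (Sx : nat -> Type) (D : forall n, (nat -> Sx n) -> Prop)
  (p : forall n, (nat -> Sx (Datatypes.S n)) -> (nat -> Sx n)),
  (forall n y, D (Datatypes.S n) y -> D n (p n y)) -> MLC1 Sx D p ->
  forall z, Qp Sx D p T z ->
  exists x : LimPt Sx, (forall n, D n (x n) /\ p n (x (Datatypes.S n)) = x n) /\ x T = z.
Proof.
  induction T; intros Sx D p H1 H2 z Hz.
  - exists (fun n => proj1_sig (liftseq Sx D p H1 H2 (exist _ z Hz) n)). split; [|reflexivity].
    intros n. split. apply (proj2_sig (liftseq Sx D p H1 H2 (exist _ z Hz) n)).
    simpl. exact (proj2 (proj2_sig (lift_next Sx D p H1 H2 n (liftseq Sx D p H1 H2 (exist _ z Hz) n)))).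
  - destruct (IHT (fun n => Sx (Datatypes.S n)) (fun n => D (Datatypes.S n)) (fun n => p (Datatypes.S n))
      (fun n y H => H1 (Datatypes.S n) y H) (fun n z => H2 (Datatypes.S n) z) z Hz) as [x' [Hx' Ex']].
    exists (fun n => match n return nat -> Sx n with O => p 0%nat (x' 0%nat) | Datatypes.S n' => x' n' end).
    split; auto. intros [|n].
    + split; auto. apply H1. apply Hx'.
    + apply Hx'.
Qed.

Lemma iter_limf {S : nat -> Type} i (x : LimPt S) n : Nat.iter i limf x n = Nat.iter i shift (x n).
Proof. induction i; simpl; auto. unfold limf at 1. rewrite IHi. reflexivity. Qed.

Lemma inLim_limf (S : nat -> Type) (X : forall n, (nat -> S n) -> Prop)
  (p : forall n, (nat -> S (Datatypes.S n)) -> (nat -> S n))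
  (HX : forall n, transitive_SFT (X n)) (Hp : equivariant_seq S X p) x :
  inLim S X p x -> inLim S X p (limf x).
Proof. intros H n. unfold limf. split. apply sft_shift. apply HX. apply H.
  destruct (Hp n) as [_ [_ He]]. rewrite He by apply H. rewrite (proj2 (H n)). reflexivity. Qed.

Lemma inLim_iter (S : nat -> Type) (X : forall n, (nat -> S n) -> Prop)
  (p : forall n, (nat -> S (Datatypes.S n)) -> (nat -> S n))
  (HX : forall n, transitive_SFT (X n)) (Hp : equivariant_seq S X p) i x : inLim S X p x -> inLim S X p (Nat.iter i limf x).
Proof. induction i; simpl; auto. intros H. apply (inLim_limf S X p HX Hp). auto. Qed.

Lemma equiv_iter (S : nat -> Type) (X : forall n, (nat -> S n) -> Prop)
  (p : forall n, (nat -> S (Datatypes.S n)) -> (nat -> S n))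
  (HX : forall n, transitive_SFT (X n)) (Hp : equivariant_seq S X p) n i y :
  X (Datatypes.S n) y -> p n (Nat.iter i shift y) = Nat.iter i shift (p n y).
Proof. intros Hy. induction i; simpl; auto. rewrite <- IHi.
  destruct (Hp n) as [_ [_ He]]. apply He. apply sft_iter; auto. apply HX. Qed.

Theorem lemma5p2
  (S : nat -> Type) (X : forall n, (nat -> S n) -> Prop)
  (p : forall n, (nat -> S (Datatypes.S n)) -> (nat -> S n))
  (HX : forall n, transitive_SFT (X n))
  (Hp : equivariant_seq S X p)
  (HMLC : MLC1 S X p)
  (d : LimPt S -> LimPt S -> R)
  (Hd : is_metric_on (inLim S X p) d)
  (Hdc : compatible_metric (inLim S X p) d)
  (Ds : forall n, (nat -> S n) -> Prop)
  (HDs : in_D_pi S X p Ds)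
  (HDMLC : MLC1 S Ds p) :
  forall eps, 0 < eps -> exists delta, 0 < delta /\
    forall xs : nat -> LimPt S,
      (forall i, inLim S X p (xs i)) ->
      (forall i, d (limf (xs i)) (xs (Datatypes.S i)) <= delta) ->
      bracket S X p Ds (xs 0%nat) ->
      exists x, bracket S X p Ds x /\
        forall i, d (Nat.iter i limf x) (xs i) <= eps.
Proof.
  intros eps Heps.
  destruct (unif_a S X p HX Hp d Hd Hdc eps Heps) as [B HB].
  destruct (downprec S X p HX Hp B B) as [r [HBr Hr]].
  destruct (unif_p S X p HX Hp B r) as [g Hg].
  destruct (proj1 (HX (Datatypes.S B))) as [_ [N [F [HN HZF]]]].
  destruct (class_open (X (Datatypes.S B)) (Ds (Datatypes.S B)) (HX _) (proj1 (HDs _))) as [r0 Hr0].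
  set (B' := (g + N + r0 + B + 2)%nat).
  destruct (unif_b S X p HX Hp d Hd Hdc B') as [e [He HBe]].
  exists (e/2). split. lra.
  intros xs Hxs Hpo H0.
  assert (Hag : forall i, agree B' (shift (xs i (Datatypes.S B))) (xs (Datatypes.S i) (Datatypes.S B))).
  { intro i. assert (H : agreeB B' (limf (xs i)) (xs (Datatypes.S i))).
    { apply HBe. apply inLim_limf; auto. auto. specialize (Hpo i). lra. }
    apply H. unfold B'; lia. }
  destruct (sft_shadow (X (Datatypes.S B)) N F HZF (fun i => xs i (Datatypes.S B)) B')
    as [z' [Hz' Hz'ag]].
  { unfold B'; lia. }
  { exact Hag. }
  { intros i. apply Hxs. }
  assert (Dz' : Ds (Datatypes.S B) z').
  { apply (Hr0 (xs 0%nat (Datatypes.S B))). apply H0. auto.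
    apply agree_sym. apply (agree_mon (Datatypes.S B')). unfold B'; lia. apply (Hz'ag 0%nat). }
  destruct (thread_from B S Ds p (fun n y H => proj2 (HDs n) y H) HDMLC (p B z'))
    as [x [Hx HxB]].
  { split. apply (proj2 (HDs B)). auto. exists z'. auto. }
  assert (HxL : inLim S X p x).
  { intros n. split. apply (class_sub (X n) (Ds n) (proj1 (HDs n))). apply Hx. apply Hx. }
  exists x. split. split; auto. intros n; apply Hx.
  intros i. left. apply HB. apply inLim_iter; auto. auto.
  intros n Hn. apply (Hr (Nat.iter i limf x) (xs i)); [apply inLim_iter; auto | auto | | lia].
  rewrite iter_limf, HxB. rewrite <- (proj2 (Hxs i B)).
  rewrite <- (equiv_iter S X p HX Hp) by auto.
  apply Hg. apply sft_iter; auto. apply HX. apply Hxs.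
  apply (agree_mon (Datatypes.S B')). unfold B'; lia. apply Hz'ag.
Qed.
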